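(* Let $\mathsf{Mono(Ab)}$ denote the full subcategory of $\mathsf{PreOrdGrp}$ consisting of the preordered groups $(G,P_G)$ with $G$ abelian and $P_G$ a subgroup of $G$. The inclusion $U\colon\mathsf{Mono(Ab)}\to\mathsf{PreOrdGrp}$ has a left adjoint $F$ given on objects by $F(G,P_G)=(G/[G,G],\ grp(\eta_G(P_G)))$, where $\eta_G\colon G\to G/[G,G]$ is the abelianization quotient and $grp(\eta_G(P_G))$ is identified with the subgroup $\{x-y : x,y\in\eta_G(P_G)\}$ of $G/[G,G]$; the $(G,P_G)$-component of the unit is the morphism given by $\eta_G$ (with restriction $P_G\to grp(\eta_G(P_G))$, $p\mapsto\eta_G(p)$).
   Context: A preordered group is a pair $(G,P_G)$ with $G$ an additively written group (not necessarily abelian) and $P_G\subseteq G$ a submonoid closed under conjugation; morphisms $(G,P_G)\to(H,P_H)$ are group homomorphisms $f$ with $f(P_G)\subseteq P_H$. This is the category $\mathsf{PreOrdGrp}$. For a commutative monoid $M$, $grp(M)$ denotes its group completion; for a submonoid $M$ of an abelian group $X$ it is isomorphic to the subgroup $\{a-b : a,b\in M\}$ of $X$. *)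

(* Defs.v *)
Record group := Group {
  carrier :> Type;
  gadd : carrier -> carrier -> carrier;
  gopp : carrier -> carrier;
  gzero : carrier;
  gaddA : forall x y z, gadd x (gadd y z) = gadd (gadd x y) z;
  gadd0l : forall x, gadd gzero x = x;
  gadd0r : forall x, gadd x gzero = x;
  gaddNl : forall x, gadd (gopp x) x = gzero;
  gaddNr : forall x, gadd x (gopp x) = gzero
}.

Arguments gadd {g} _ _.
Arguments gopp {g} _.
Arguments gzero {g}.

Definition gsub {G : group} (x y : G) : G := gadd x (gopp y).

Definition is_hom {G H : group} (f : G -> H) : Prop :=
  forall x y : G, f (gadd x y) = gadd (f x) (f y).

Definition abelian (G : group) : Prop := forall x y : G, gadd x y = gadd y x.

Definition submonoid {G : group} (P : G -> Prop) : Prop :=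
  P gzero /\ forall x y, P x -> P y -> P (gadd x y).

Definition subgroup {G : group} (P : G -> Prop) : Prop :=
  P gzero /\ (forall x y, P x -> P y -> P (gadd x y)) /\ (forall x, P x -> P (gopp x)).

(* P_G : submonoid closed under conjugation: (G,P) is an object of PreOrdGrp *)
Definition preordered {G : group} (P : G -> Prop) : Prop :=
  submonoid P /\ forall g x, P x -> P (gadd (gadd g x) (gopp g)).

Definition preord_morph {G H : group} (P : G -> Prop) (Q : H -> Prop) (f : G -> H) : Prop :=
  is_hom f /\ forall x, P x -> Q (f x).

Definition mono_ab (G : group) (P : G -> Prop) : Prop := abelian G /\ subgroup P.

Definition commutator {G : group} (x y : G) : G :=
  gadd (gadd (gadd (gopp x) (gopp y)) x) y.

Inductive in_commutator_subgroup (G : group) : G -> Prop :=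
| ics_zero : in_commutator_subgroup G gzero
| ics_comm : forall x y, in_commutator_subgroup G (commutator x y)
| ics_add : forall a b, in_commutator_subgroup G a -> in_commutator_subgroup G b ->
            in_commutator_subgroup G (gadd a b)
| ics_opp : forall a, in_commutator_subgroup G a -> in_commutator_subgroup G (gopp a).

Definition abelianization_quotient {G A : group} (eta : G -> A) : Prop :=
  is_hom eta /\ (forall a : A, exists x, eta x = a) /\
  (forall x, eta x = gzero <-> in_commutator_subgroup G x).

Definition grp_image {G A : group} (eta : G -> A) (P : G -> Prop) (a : A) : Prop :=
  exists x y, P x /\ P y /\ a = gsub (eta x) (eta y).

(* Main.v *)
Require Import Defs.
From Stdlib Require Import ClassicalEpsilon.

Section GL.
Variable G : group.
Lemma addl_cancel (a b c : G) : gadd a b = gadd a c -> b = c.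
Proof. intro E. rewrite <- (gadd0l _ b), <- (gadd0l _ c), <- (gaddNl _ a), <- !gaddA, E. reflexivity. Qed.
Lemma opp_unique (x y : G) : gadd x y = gzero -> y = gopp x.
Proof. intro E. apply (addl_cancel x). rewrite E, gaddNr. reflexivity. Qed.
Lemma opp_add (a b : G) : gopp (gadd a b) = gadd (gopp b) (gopp a).
Proof. symmetry. apply opp_unique. rewrite <- gaddA, (gaddA _ b), gaddNr, gadd0l, gaddNr. reflexivity. Qed.
Lemma opp_opp (a : G) : gopp (gopp a) = a.
Proof. symmetry. apply opp_unique. apply gaddNl. Qed.
End GL.

Lemma hom_zero (G H : group) (f : G -> H) : is_hom f -> f gzero = gzero.
Proof. intro h. apply (addl_cancel _ (f gzero)). rewrite <- h, !gadd0r. reflexivity. Qed.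
Lemma hom_opp (G H : group) (f : G -> H) x : is_hom f -> f (gopp x) = gopp (f x).
Proof. intro h. apply opp_unique. rewrite <- h, gaddNr. apply (hom_zero _ _ f h). Qed.

Lemma comm_zero (H : group) : abelian H -> forall x y : H, commutator x y = gzero.
Proof. intros ab x y. unfold commutator. rewrite (ab (gopp x)), <- (gaddA _ (gopp y) (gopp x) x), gaddNl, gadd0r, gaddNl. reflexivity. Qed.

Lemma kill_comm (G H : group) (f : G -> H) : is_hom f -> abelian H ->
  forall x, in_commutator_subgroup G x -> f x = gzero.
Proof.
  intros h ab x Hx. induction Hx.
  - apply (hom_zero _ _ f h).
  - unfold commutator. rewrite !h, !(hom_opp _ _ f _ h). apply (comm_zero _ ab).
  - rewrite h, IHHx1, IHHx2, gadd0l. reflexivity.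
  - rewrite (hom_opp _ _ f _ h), IHHx. symmetry. apply opp_unique. apply gadd0l.
Qed.

Theorem proposition5p1 (G : group) (P : G -> Prop) (HP : preordered P)
  (A : group) (eta : G -> A) (Heta : abelianization_quotient eta) :
  (* F(G,P) = (A, grp(eta(P))) is an object of Mono(Ab) *)
  mono_ab A (grp_image eta P) /\
  (* the unit component eta : (G,P) -> U F (G,P) is a morphism of PreOrdGrp *)
  preord_morph P (grp_image eta P) eta /\
  (* universal property of the unit *)
  (forall (H : group) (Q : H -> Prop), mono_ab H Q ->
   forall f : G -> H, preord_morph P Q f ->
     (exists g : A -> H, preord_morph (grp_image eta P) Q g /\
                         forall x, g (eta x) = f x) /\
     (forall g1 g2 : A -> H,
        preord_morph (grp_image eta P) Q g1 -> preord_morph (grp_image eta P) Q g2 ->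
        (forall x, g1 (eta x) = f x) -> (forall x, g2 (eta x) = f x) ->
        forall a, g1 a = g2 a)).
Proof.
  destruct Heta as [eh [esurj eker]].
  destruct HP as [[P0 Padd] Pconj].
  assert (abA : abelian A).
  { intros a b. destruct (esurj a) as [x <-]. destruct (esurj b) as [y <-].
    assert (E : eta (commutator x y) = gzero) by (apply eker; constructor).
    unfold commutator in E. rewrite !eh, !(hom_opp _ _ eta _ eh) in E.
    apply (addl_cancel _ (gadd (gopp (eta x)) (gopp (eta y)))).
    transitivity (gzero : A).
    { rewrite <- E. rewrite (gaddA _ _ (eta x) (eta y)). reflexivity. }
    rewrite <- (gaddA _ (gopp (eta x)) (gopp (eta y)) (gadd (eta y) (eta x))).
    rewrite (gaddA _ (gopp (eta y)) (eta y) (eta x)), gaddNl, gadd0l, gaddNl. reflexivity. }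
  assert (sub_eq : forall a b c d : A, gadd (gsub a b) (gsub c d) = gsub (gadd a c) (gadd b d)).
  { intros a b c d. unfold gsub. rewrite (opp_add _ b d), (abA (gopp d)).
    rewrite <- !gaddA. f_equal. rewrite !gaddA. f_equal. apply abA. }
  split; [split; [exact abA|] | split].
  - split; [|split].
    + exists gzero, gzero. unfold gsub. rewrite gaddNr. auto.
    + intros a b [x [y [Px [Py ->]]]] [x' [y' [Px' [Py' ->]]]].
      exists (gadd x x'), (gadd y y'). rewrite !eh, sub_eq. auto.
    + intros a [x [y [Px [Py ->]]]]. exists y, x. split; auto. split; auto.
      unfold gsub. rewrite opp_add, opp_opp. reflexivity.
  - split; [exact eh|]. intros x Px. exists x, gzero. repeat split; auto.
    unfold gsub. rewrite (hom_zero _ _ eta eh).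
    rewrite <- (opp_unique _ gzero gzero (gadd0l _ _)), gadd0r. reflexivity.
  - intros H Q [abH [Q0 [Qadd Qopp]]] f [fh fQ].
    assert (wd : forall x y, eta x = eta y -> f x = f y).
    { intros x y E.
      assert (K : f (gadd x (gopp y)) = gzero).
      { apply (kill_comm _ _ f fh abH). apply eker. rewrite eh, (hom_opp _ _ eta _ eh), E, gaddNr. reflexivity. }
      rewrite fh, (hom_opp _ _ f _ fh) in K.
      rewrite <- (gadd0l _ (f y)), <- K, <- gaddA, gaddNl, gadd0r. reflexivity. }
    assert (pre : forall a : A, { x : G | eta x = a }).
    { intro a. apply constructive_indefinite_description. apply esurj. }
    assert (gcomp : forall g : A -> H, is_hom g -> (forall x, g (eta x) = f x) ->
              forall x y, P x -> P y -> Q (g (gsub (eta x) (eta y)))).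
    { intros g gh gf x y Px Py. unfold gsub. rewrite gh, (hom_opp _ _ g _ gh), !gf.
      apply Qadd; [|apply Qopp]; apply fQ; assumption. }
    split.
    + set (g := fun a => f (proj1_sig (pre a))).
      assert (gf : forall x, g (eta x) = f x).
      { intro x. unfold g. destruct (pre (eta x)) as [x' Ex']. simpl. apply wd. exact Ex'. }
      assert (gh : is_hom g).
      { intros a b. destruct (esurj a) as [x <-]. destruct (esurj b) as [y <-].
        rewrite <- eh, !gf. apply fh. }
      exists g. split; [split; [exact gh|] | exact gf].
      intros a [x [y [Px [Py ->]]]]. apply (gcomp g gh gf x y Px Py).
    + intros g1 g2 _ _ E1 E2 a. destruct (esurj a) as [x <-]. rewrite E1, E2. reflexivity.
Qed.
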